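(* Let $\kappa$ be a cardinal, $C$ the set of elements of $(\mathbb{R}/\mathbb{Z})^{\oplus\kappa}$ of order strictly greater than $2$, $\mu:C\to\kappa$ given by $\mu(x)=\min\{\alpha<\kappa:\pi_\alpha(x)\notin\{0,\tfrac12\}\}$, and $C_1=\{x\in C:\pi_{\mu(x)}(x)=\tfrac14\}$. Then the restriction of $\mu$ to $C_1$ is a rank function on $C_1$ (with $C_1$ carrying the partial operation induced from the group).
   Context: $(\mathbb{R}/\mathbb{Z})^{\oplus\kappa}$ is the additive direct sum of $\kappa$ copies of $\mathbb{R}/\mathbb{Z}$; $\pi_\alpha(x)$ is the $\alpha$-th coordinate of $x$, identified with its representative in $[0,1)$. A subset $X$ carries the induced partial operation: $x+y$ defined iff $x,y,x+y\in X$. For a sequence $\vec{x}=(x_n)_{n\in\omega}$ in $X$ all of whose finite sums $\sum_{i\in a}x_i$ ($a$ finite nonempty subset of $\omega$) lie in $X$, $\mathrm{FS}(\vec{x})$ is the set of these sums and $\mathrm{FS}_1(\vec{x})=\mathrm{FS}((x_{n+1})_n)$; an IP-set of $X$ is a subset containing such an $\mathrm{FS}(\vec{x})$. A rank function on $X$ is a function $\rho$ from $X$ to a well-ordered set such that for every such sequence $\vec{x}$: (1) $\rho$ restricted to $\{x_n:n\in\omega\}$ is finite-to-one; and (2) if $\rho(x_n)\ge\rho(x_0)$ for all $n$, then $x_0+\mathrm{FS}_1(\vec{x})$ is not an IP-set of $X$. *)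

(* Defs.v *)
From Stdlib Require Import Reals List Arith.
Open Scope R_scope.

(* A (strict) well-order on an index type: the cardinal kappa is modelled
   by an arbitrary well-ordered index type (I, lt); alpha < kappa ranges over I. *)
Definition is_well_order {I : Type} (lt : I -> I -> Prop) : Prop :=
  (forall a, ~ lt a a) /\
  (forall a b c, lt a b -> lt b c -> lt a c) /\
  (forall a b, lt a b \/ a = b \/ lt b a) /\
  well_founded lt.

(* Elements of (R/Z)^{(+) I}: functions I -> R, each coordinate the
   representative in [0,1), with finite support. *)
Definition elt (I : Type) := I -> R.

Definition in_dsum {I : Type} (x : elt I) : Prop :=
  (forall a, 0 <= x a < 1) /\
  exists l : list I, forall a, ~ In a l -> x a = 0.

Definition zero {I : Type} : elt I := fun _ => 0.

Definition add {I : Type} (x y : elt I) : elt I :=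
  fun a => frac_part (x a + y a).

Definition eqe {I : Type} (x y : elt I) : Prop := forall a, x a = y a.

Definition Cgt2 {I : Type} (x : elt I) : Prop :=
  in_dsum x /\ ~ eqe (add x x) zero.

Definition is_mu {I : Type} (lt : I -> I -> Prop) (x : elt I) (a : I) : Prop :=
  (x a <> 0 /\ x a <> 1/2) /\
  (forall b, lt b a -> x b = 0 \/ x b = 1/2).

Definition Cquarter {I : Type} (mu : elt I -> I) (x : elt I) : Prop :=
  Cgt2 x /\ x (mu x) = 1/4.

(* finite nonempty subsets of omega, as nonempty duplicate-free lists *)
Definition fin_ne (s : list nat) : Prop := s <> nil /\ NoDup s.

Definition sumL {I : Type} (x : nat -> elt I) (s : list nat) : elt I :=
  fold_right (fun n acc => add (x n) acc) zero s.

Definition FS_in {I : Type} (X : elt I -> Prop) (x : nat -> elt I) : Prop :=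
  (forall n, X (x n)) /\ (forall s, fin_ne s -> X (sumL x s)).

Definition IP_set {I : Type} (X : elt I -> Prop) (A : elt I -> Prop) : Prop :=
  exists y : nat -> elt I, FS_in X y /\ (forall s, fin_ne s -> A (sumL y s)).

Definition shiftFS1 {I : Type} (x : nat -> elt I) (z : elt I) : Prop :=
  exists s, fin_ne s /\ eqe z (add (x 0%nat) (sumL (fun n => x (S n)) s)).

Definition rank_function {I : Type} (lt : I -> I -> Prop)
    (X : elt I -> Prop) (rho : elt I -> I) : Prop :=
  forall x : nat -> elt I, FS_in X x ->
    (* (1) rho restricted to {x_n : n in omega} is finite-to-one *)
    (forall a : I, exists N : nat, forall n,
        rho (x n) = a -> exists m, (m < N)%nat /\ eqe (x n) (x m)) /\
    ((forall n, ~ lt (rho (x n)) (rho (x 0%nat))) ->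
       ~ IP_set X (shiftFS1 x)).

(* Main.v *)
Require Import Defs.
From Stdlib Require Import Reals List Arith.
From Stdlib Require Import Lra Lia Classical.
Import ListNotations.

Lemma fp1 r : 0 <= r < 1 -> frac_part r = r.
Proof.
  intros H. unfold frac_part, Int_part.
  assert (E : up r = 1%Z). { symmetry; apply tech_up; simpl; lra. }
  rewrite E. simpl. lra.
Qed.

Lemma fp2 r : 1 <= r < 2 -> frac_part r = r - 1.
Proof.
  intros H. unfold frac_part, Int_part.
  assert (E : up r = 2%Z). { symmetry; apply tech_up; simpl; lra. }
  rewrite E. simpl. lra.
Qed.

Definition qv (k : nat) : R := INR k / 4.

Lemma add_qv {I} (x y : elt I) b k1 k2 : (k1 < 4)%nat -> (k2 < 4)%nat ->
  x b = qv k1 -> y b = qv k2 -> add x y b = qv ((k1 + k2) mod 4).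
Proof.
  intros L1 L2 H1 H2. unfold add. rewrite H1, H2.
  destruct k1 as [|[|[|[|k1]]]]; try lia;
  destruct k2 as [|[|[|[|k2]]]]; try lia; simpl; unfold qv; simpl;
  first [rewrite fp1 by lra; lra | rewrite fp2 by lra; lra].
Qed.

Lemma zero_qv {I} (b : I) : zero b = qv 0.
Proof. unfold zero, qv; simpl; lra. Qed.

Lemma qv_inj k k' : qv k = qv k' -> k = k'.
Proof. unfold qv; intros H. apply INR_eq. lra. Qed.

Definition Ev {I} (x : elt I) b := x b = qv 0 \/ x b = qv 2.

Lemma E_Ev {I} (x : elt I) b : x b = 0 \/ x b = 1/2 -> Ev x b.
Proof. unfold Ev, qv; simpl; intros [H|H]; [left|right]; lra. Qed.

Lemma Ev_E {I} (x : elt I) b : Ev x b -> x b = 0 \/ x b = 1/2.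
Proof. unfold Ev, qv; simpl; intros [H|H]; [left|right]; lra. Qed.

Lemma add_Ev {I} (x y : elt I) b : Ev x b -> Ev y b -> Ev (add x y) b.
Proof.
  unfold Ev; intros [H1|H1] [H2|H2];
  [left|right|right|left];
  [ exact (add_qv x y b 0 0 ltac:(lia) ltac:(lia) H1 H2)
  | exact (add_qv x y b 0 2 ltac:(lia) ltac:(lia) H1 H2)
  | exact (add_qv x y b 2 0 ltac:(lia) ltac:(lia) H1 H2)
  | exact (add_qv x y b 2 2 ltac:(lia) ltac:(lia) H1 H2)].
Qed.

Lemma sumL_Ev {I} (x : nat -> elt I) b s :
  (forall n, In n s -> Ev (x n) b) -> Ev (sumL x s) b.
Proof.
  induction s as [|n s IH]; intros H; simpl.
  - left. apply zero_qv.
  - apply add_Ev. apply H; simpl; auto. apply IH. intros; apply H; simpl; auto.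
Qed.

Lemma NoDup2 (a b : nat) : a <> b -> NoDup [a; b].
Proof. intros. constructor. simpl; intuition. constructor. simpl; tauto. constructor. Qed.

Lemma NoDup3 (a b c : nat) : a <> b -> a <> c -> b <> c -> NoDup [a; b; c].
Proof.
  intros. constructor. simpl; intuition. constructor. simpl; intuition.
  constructor. simpl; tauto. constructor.
Qed.

Lemma fin1 (a : nat) : fin_ne [a].
Proof. split. discriminate. constructor. simpl; tauto. constructor. Qed.
Lemma fin2 (a b : nat) : a <> b -> fin_ne [a; b].
Proof. split. discriminate. apply NoDup2; auto. Qed.
Lemma fin3 (a b c : nat) : a <> b -> a <> c -> b <> c -> fin_ne [a; b; c].
Proof. split. discriminate. apply NoDup3; auto. Qed.

Section Main.
Variables (I : Type) (lt : I -> I -> Prop) (Hwo : is_well_order lt)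
  (mu : elt I -> I) (Hmu : forall x : elt I, Cgt2 x -> is_mu lt x (mu x)).

Lemma trich a b : lt a b \/ a = b \/ lt b a.
Proof. destruct Hwo as (_&_&T&_). apply T. Qed.

Lemma K (w : elt I) a : Cquarter mu w -> (forall b, lt b a -> Ev w b) ->
  w a = qv 3 -> False.
Proof.
  intros [HC Hq] Hb Ha. destruct (Hmu w HC) as [[N0 N1] Hmin].
  destruct (trich (mu w) a) as [L|[E|L]].
  - destruct (Ev_E _ _ (Hb _ L)); tauto.
  - subst. rewrite Ha in Hq. unfold qv in Hq; simpl in Hq; lra.
  - destruct (Hmin _ L) as [e|e]; rewrite Ha in e; unfold qv in e; simpl in e; lra.
Qed.

Lemma below_Ev (w : elt I) b : Cquarter mu w -> lt b (mu w) -> Ev w b.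
Proof. intros [HC _] L. apply E_Ev. exact (proj2 (Hmu w HC) b L). Qed.

Lemma at_mu (w : elt I) : Cquarter mu w -> w (mu w) = qv 1.
Proof. intros [_ H]. rewrite H. unfold qv; simpl; lra. Qed.

Lemma triple (x : nat -> elt I) a n1 n2 n3 : FS_in (Cquarter mu) x ->
  n1 <> n2 -> n1 <> n3 -> n2 <> n3 ->
  mu (x n1) = a -> mu (x n2) = a -> mu (x n3) = a -> False.
Proof.
  intros [HX HS] d12 d13 d23 e1 e2 e3.
  assert (HW := HS [n1; n2; n3] (fin3 _ _ _ d12 d13 d23)).
  apply (K _ a HW).
  - intros b L. apply sumL_Ev. intros n Hn. simpl in Hn.
    destruct Hn as [<-|[<-|[<-|[]]]]; apply below_Ev; auto;
    [rewrite e1|rewrite e2|rewrite e3]; auto.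
  - change (add (x n1) (add (x n2) (add (x n3) zero)) a = qv 3).
    pose proof (at_mu _ (HX n1)) as A1. pose proof (at_mu _ (HX n2)) as A2.
    pose proof (at_mu _ (HX n3)) as A3. rewrite e1 in A1; rewrite e2 in A2; rewrite e3 in A3.
    pose proof (add_qv _ _ a 1 0 ltac:(lia) ltac:(lia) A3 (zero_qv a)) as B3.
    simpl in B3.
    pose proof (add_qv _ _ a 1 1 ltac:(lia) ltac:(lia) A2 B3) as B2. simpl in B2.
    pose proof (add_qv _ _ a 1 2 ltac:(lia) ltac:(lia) A1 B2) as B1. simpl in B1.
    exact B1.
Qed.

Lemma part1 (x : nat -> elt I) : FS_in (Cquarter mu) x ->
  forall a : I, exists N : nat, forall n,
        mu (x n) = a -> exists m, (m < N)%nat /\ eqe (x n) (x m).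
Proof.
  intros HF a.
  destruct (classic (exists n, mu (x n) = a)) as [[n1 H1]|H0].
  2:{ exists 0%nat. intros n Hn. exfalso. apply H0. eauto. }
  destruct (classic (exists n, n <> n1 /\ mu (x n) = a)) as [[n2 [d H2]]|H0].
  2:{ exists (S n1). intros n Hn. exists n. split.
      destruct (Nat.eq_dec n n1). lia. exfalso; apply H0; eauto.
      intro; reflexivity. }
  exists (S (Nat.max n1 n2)). intros n Hn. exists n. split. 2:(intro; reflexivity).
  destruct (Nat.eq_dec n n1). lia. destruct (Nat.eq_dec n n2). lia.
  exfalso. apply (triple x a n1 n2 n); auto.
Qed.

Section P2.
Variable x : nat -> elt I.
Hypothesis HF : FS_in (Cquarter mu) x.
Hypothesis Hge : forall n, ~ lt (mu (x n)) (mu (x 0%nat)).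

Lemma cA n b : lt b (mu (x 0%nat)) -> Ev (x n) b.
Proof.
  intros L. apply below_Ev. apply (proj1 HF).
  destruct (trich (mu (x n)) (mu (x 0%nat))) as [L'|[E|L']].
  - exfalso; exact (Hge n L').
  - rewrite E; auto.
  - destruct Hwo as (_&T&_). eauto.
Qed.

Lemma sum_below s b : lt b (mu (x 0%nat)) -> Ev (sumL x s) b.
Proof. intros L. apply sumL_Ev. intros; apply cA; auto. Qed.

Lemma x0a : x 0%nat (mu (x 0%nat)) = qv 1.
Proof. apply at_mu, (proj1 HF). Qed.

Lemma cC n : n <> 0%nat -> x n (mu (x 0%nat)) = qv 0 \/ x n (mu (x 0%nat)) = qv 1.
Proof.
  intros Hn. set (a := mu (x 0%nat)).
  destruct (trich (mu (x n)) a) as [L'|[E|L']].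
  - exfalso; exact (Hge n L').
  - right. rewrite <- E. apply at_mu, (proj1 HF).
  - assert (Ev (x n) a) as [H|H] by (apply below_Ev; auto; apply (proj1 HF)).
    + left; exact H.
    + exfalso.
      assert (HW := proj2 HF [0%nat; n] (fin2 _ _ (not_eq_sym Hn))).
      apply (K _ a HW). intros; apply sum_below; auto.
      change (add (x 0%nat) (add (x n) zero) a = qv 3).
      pose proof (add_qv _ _ a 2 0 ltac:(lia) ltac:(lia) H (zero_qv a)) as B3. simpl in B3.
      pose proof (add_qv _ _ a 1 2 ltac:(lia) ltac:(lia) x0a B3) as B2. simpl in B2.
      exact B2.
Qed.

Lemma cD n1 n2 : n1 <> n2 -> n1 <> 0%nat -> n2 <> 0%nat ->
  x n1 (mu (x 0%nat)) = qv 1 -> x n2 (mu (x 0%nat)) = qv 1 -> False.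
Proof.
  intros d h1 h2 A1 A2. set (a := mu (x 0%nat)) in *.
  assert (HW := proj2 HF [0%nat; n1; n2]
     (fin3 _ _ _ (not_eq_sym h1) (not_eq_sym h2) d)).
  apply (K _ a HW). intros; apply sum_below; auto.
  change (add (x 0%nat) (add (x n1) (add (x n2) zero)) a = qv 3).
  pose proof (add_qv _ _ a 1 0 ltac:(lia) ltac:(lia) A2 (zero_qv a)) as B3. simpl in B3.
  pose proof (add_qv _ _ a 1 1 ltac:(lia) ltac:(lia) A1 B3) as B2. simpl in B2.
  pose proof (add_qv _ _ a 1 2 ltac:(lia) ltac:(lia) x0a B2) as B1. simpl in B1.
  exact B1.
Qed.

Lemma cE s : NoDup s ->
  sumL (fun n => x (S n)) s (mu (x 0%nat)) = qv 0 \/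
  (sumL (fun n => x (S n)) s (mu (x 0%nat)) = qv 1 /\
   exists i, In i s /\ x (S i) (mu (x 0%nat)) = qv 1).
Proof.
  set (a := mu (x 0%nat)).
  induction s as [|i s IH]; intros ND.
  - left. apply zero_qv.
  - apply NoDup_cons_iff in ND. destruct ND as [Ni ND].
    change (sumL (fun n => x (S n)) (i :: s)) with (add (x (S i)) (sumL (fun n => x (S n)) s)).
    destruct (cC (S i) ltac:(discriminate)) as [c|c];
    destruct (IH ND) as [d|[d [i' [Hi' Hx]]]].
    + left. exact (add_qv _ _ a 0 0 ltac:(lia) ltac:(lia) c d).
    + right. split. exact (add_qv _ _ a 0 1 ltac:(lia) ltac:(lia) c d).
      exists i'; simpl; auto.
    + right. split. exact (add_qv _ _ a 1 0 ltac:(lia) ltac:(lia) c d).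
      exists i; simpl; auto.
    + exfalso. apply (cD (S i) (S i')); auto.
      intro E; injection E as E; subst; auto.
Qed.

Lemma cF z : shiftFS1 x z -> z (mu (x 0%nat)) = qv 1 \/ z (mu (x 0%nat)) = qv 2.
Proof.
  intros [s [[_ ND] Hz]]. rewrite Hz. set (a := mu (x 0%nat)).
  destruct (cE s ND) as [d|[d _]].
  - left. exact (add_qv _ _ a 1 0 ltac:(lia) ltac:(lia) x0a d).
  - right. exact (add_qv _ _ a 1 1 ltac:(lia) ltac:(lia) x0a d).
Qed.

Lemma part2 : ~ IP_set (Cquarter mu) (shiftFS1 x).
Proof.
  intros [y [[HY _] HS]]. set (a := mu (x 0%nat)).
  assert (Hs : forall i, y i a = qv 1 \/ y i a = qv 2).
  { intros i. pose proof (cF _ (HS [i] (fin1 i))) as H.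
    change (add (y i) zero a = qv 1 \/ add (y i) zero a = qv 2) in H.
    unfold add, zero in H. rewrite Rplus_0_r, fp1 in H; auto.
    destruct (HY i) as [[[R _] _] _]. apply R. }
  assert (H01 := cF _ (HS [0%nat; 1%nat] (fin2 0 1 ltac:(lia)))).
  assert (H12 := cF _ (HS [1%nat; 2%nat] (fin2 1 2 ltac:(lia)))).
  assert (H012 := cF _ (HS [0%nat; 1%nat; 2%nat]
     (fin3 0 1 2 ltac:(lia) ltac:(lia) ltac:(lia)))).
  change (add (y 0%nat) (add (y 1%nat) zero) a = qv 1 \/
          add (y 0%nat) (add (y 1%nat) zero) a = qv 2) in H01.
  change (add (y 1%nat) (add (y 2%nat) zero) a = qv 1 \/
          add (y 1%nat) (add (y 2%nat) zero) a = qv 2) in H12.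
  change (add (y 0%nat) (add (y 1%nat) (add (y 2%nat) zero)) a = qv 1 \/
          add (y 0%nat) (add (y 1%nat) (add (y 2%nat) zero)) a = qv 2) in H012.
  assert (Hk : forall i, exists k, (k = 1 \/ k = 2)%nat /\ y i a = qv k).
  { intros i; destruct (Hs i); eauto. }
  destruct (Hk 0%nat) as [k0 [K0 c0]]. destruct (Hk 1%nat) as [k1 [K1 c1]].
  destruct (Hk 2%nat) as [k2 [K2 c2]].
  pose proof (add_qv _ _ a k2 0 ltac:(lia) ltac:(lia) c2 (zero_qv a)) as z2.
  pose proof (add_qv _ _ a k1 0 ltac:(lia) ltac:(lia) c1 (zero_qv a)) as z1.
  pose proof (add_qv _ _ a k1 _ ltac:(lia) (Nat.mod_upper_bound _ 4 ltac:(lia)) c1 z2) as z12.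
  pose proof (add_qv _ _ a k0 _ ltac:(lia) (Nat.mod_upper_bound _ 4 ltac:(lia)) c0 z1) as z01.
  pose proof (add_qv _ _ a k0 _ ltac:(lia) (Nat.mod_upper_bound _ 4 ltac:(lia)) c0 z12) as z012.
  rewrite z01 in H01; rewrite z12 in H12; rewrite z012 in H012.
  destruct H01 as [H01|H01]; apply qv_inj in H01;
  destruct H12 as [H12|H12]; apply qv_inj in H12;
  destruct H012 as [H012|H012]; apply qv_inj in H012;
  destruct K0; destruct K1; destruct K2; subst; simpl in H01, H12, H012; discriminate.
Qed.

End P2.

End Main.

Theorem mainTheorem9 (I : Type) (lt : I -> I -> Prop) (Hwo : is_well_order lt)
  (mu : elt I -> I) (Hmu : forall x : elt I, Cgt2 x -> is_mu lt x (mu x)) :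
  rank_function lt (Cquarter mu) mu.
Proof.
  intros x HF. split.
  - exact (part1 I lt Hwo mu Hmu x HF).
  - intros Hge. exact (part2 I lt Hwo mu Hmu x HF Hge).
Qed.
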